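(* Let $C\in O_A^+(\mathbb{Z})$, $c_1,c_2\in\overline C_Q$ and $(z,\tau)\in D(c_1)\cap D(c_2)$. Then $C\cdot C_Q=C_Q$, $C\cdot S_Q=S_Q$, $(Cz,\tau)\in D(Cc_1)\cap D(Cc_2)$, and $$\theta^{Cc_1,Cc_2}(Cz;\tau)=\theta^{c_1,c_2}(z;\tau).$$
   Context: $A$ is a nondegenerate symmetric $r\times r$ integer matrix, $Q(x)=\frac12\langle x,Ax\rangle$, $B(x,y)=\langle x,Ay\rangle$, $Q$ of type $(r-1,1)$. Fix $c_0$ with $Q(c_0)<0$; $C_Q=\{c\in\mathbb{R}^r:Q(c)<0,B(c,c_0)<0\}$, $S_Q=\{c\in\mathbb{Z}^r\text{ primitive}:Q(c)=0,B(c,c_0)<0\}$, $\overline C_Q=C_Q\cup S_Q$. $O_A^+(\mathbb{R})=\{C\in\mathrm{GL}_r(\mathbb{R}):C^tAC=A,\ B(Cc,c)<0\ \forall c\in C_Q\}$, $O_A^+(\mathbb{Z})=O_A^+(\mathbb{R})\cap\mathrm{GL}_r(\mathbb{Z})$. $R(c)=\mathbb{R}^r$ for $c\in C_Q$, $R(c)=\{a:B(c,a)\notin\mathbb{Z}\}$ for $c\in S_Q$; $D(c)=\{(z,\tau)\in\mathbb{C}^r\times\mathbb{H}:\operatorname{Im}z/\operatorname{Im}\tau\in R(c)\}$. With $y=\operatorname{Im}\tau$, $E(z)=2\int_0^ze^{-\pi t^2}dt$: $\rho^c(\nu;\tau)=E(\frac{B(c,\nu)}{\sqrt{-Q(c)}}y^{1/2})$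 for $c\in C_Q$, $\operatorname{sign}(B(c,\nu))$ for $c\in S_Q$; $\rho^{c_1,c_2}=\rho^{c_1}-\rho^{c_2}$; $\theta^{c_1,c_2}(z;\tau)=\sum_{n\in\mathbb{Z}^r}\rho^{c_1,c_2}(n+a;\tau)e^{2\pi iQ(n)\tau+2\pi iB(n,z)}$ with $a=\operatorname{Im}z/\operatorname{Im}\tau$. *)

(* Defs.v *)
From HB Require Import structures.
From mathcomp Require Import all_boot all_order all_algebra.
From mathcomp Require Import complex Rstruct.
From Stdlib Require Import Reals ClassicalEpsilon.
From Coquelicot Require Hierarchy RInt.
Set Implicit Arguments. Unset Strict Implicit. Unset Printing Implicit Defensive.
Import Order.TTheory GRing.Theory Num.Theory.
Local Open Scope ring_scope.

Notation Cx := (R[i]).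

Definition intR (x : int) : R := x%:~R.
Definition intC (x : int) : Cx := x%:~R.
Definition realC (x : R) : Cx := (x +i* 0)%C.

Definition AR r (A : 'M[int]_r) : 'M[R]_r := map_mx intR A.
Definition Bf r (A : 'M[int]_r) (x y : 'cV[R]_r) : R := (x^T *m AR A *m y) 0 0.
Definition Qf r (A : 'M[int]_r) (x : 'cV[R]_r) : R := Bf A x x / 2.

Definition type_r1_1 r (A : 'M[int]_r) : Prop :=
  exists P : 'M[R]_r, P \in unitmx /\
    P^T *m AR A *m P = diag_mx (\row_(i < r) if (i : nat) == r.-1 then -1 else 1).

Definition CQ r (A : 'M[int]_r) (c0 c : 'cV[R]_r) : Prop :=
  Qf A c < 0 /\ Bf A c c0 < 0.

Definition primitive r (m : 'cV[int]_r) : Prop :=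
  forall d : int, (forall i, m i 0 \in dvdz d) -> d = 1 \/ d = -1.

Definition SQ r (A : 'M[int]_r) (c0 : 'cV[R]_r) (m : 'cV[int]_r) : Prop :=
  primitive m /\ Qf A (map_mx intR m) = 0 /\ Bf A (map_mx intR m) c0 < 0.

Definition CQbar r (A : 'M[int]_r) (c0 c : 'cV[R]_r) : Prop :=
  CQ A c0 c \/ exists m, SQ A c0 m /\ c = map_mx intR m.

Definition OAplusR r (A : 'M[int]_r) (c0 : 'cV[R]_r) (C : 'M[R]_r) : Prop :=
  C \in unitmx /\ C^T *m AR A *m C = AR A /\
  forall c, CQ A c0 c -> Bf A (C *m c) c < 0.
Definition OAplusZ r (A : 'M[int]_r) (c0 : 'cV[R]_r) (C : 'M[int]_r) : Prop :=
  OAplusR A c0 (map_mx intR C) /\ C \in unitmx.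

Definition avec r (z : 'cV[Cx]_r) (tau : Cx) : 'cV[R]_r :=
  map_mx (fun w : Cx => complex.Im w / complex.Im tau) z.

Definition Rset r (A : 'M[int]_r) (c0 c a : 'cV[R]_r) : Prop :=
  CQ A c0 c \/
  ((exists m, SQ A c0 m /\ c = map_mx intR m) /\ ~ (exists k : int, Bf A c a = intR k)).
Definition Dset r (A : 'M[int]_r) (c0 c : 'cV[R]_r) (z : 'cV[Cx]_r) (tau : Cx) : Prop :=
  0 < complex.Im tau /\ Rset A c0 c (avec z tau).

Definition Eerf (x : R) : R :=
  (2 * RInt.RInt (V := Hierarchy.R_CompleteNormedModule) (fun t => exp (- PI * (t * t))) 0 x)%R.

Definition rho r (A : 'M[int]_r) (c0 c nu : 'cV[R]_r) (tau : Cx) : R :=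
  if excluded_middle_informative (CQ A c0 c) then
    Eerf (Bf A c nu / sqrt (- Qf A c) * sqrt (complex.Im tau))
  else Num.sg (Bf A c nu).

Definition cexp (w : Cx) : Cx :=
  ((exp (complex.Re w) * cos (complex.Im w)) +i* (exp (complex.Re w) * sin (complex.Im w)))%C.

Definition twopii : Cx := (0 +i* (2 * PI))%C.

Definition BnC r (A : 'M[int]_r) (n : 'cV[int]_r) (z : 'cV[Cx]_r) : Cx :=
  ((map_mx intC n)^T *m map_mx intC A *m z) 0 0.

Definition theta_term r (A : 'M[int]_r) (c0 c1 c2 : 'cV[R]_r) (z : 'cV[Cx]_r) (tau : Cx)
  (n : 'cV[int]_r) : Cx :=
  let nu := map_mx intR n + avec z tau in
  realC (rho A c0 c1 nu tau - rho A c0 c2 nu tau) *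
  cexp (twopii * realC (Qf A (map_mx intR n)) * tau + twopii * BnC A n z).

(* unordered (net) summation over Z^r *)
Definition HasSum r (f : 'cV[int]_r -> Cx) (s : Cx) : Prop :=
  forall eps : R, 0 < eps -> exists F0 : seq 'cV[int]_r,
    forall F : seq 'cV[int]_r, uniq F -> {subset F0 <= F} ->
      `|\sum_(n <- F) f n - s| < realC eps.

Definition SumZr r (f : 'cV[int]_r -> Cx) : Cx :=
  epsilon (inhabits 0) (fun s => HasSum f s).

Definition theta r (A : 'M[int]_r) (c0 c1 c2 : 'cV[R]_r) (z : 'cV[Cx]_r) (tau : Cx) : Cx :=
  SumZr (theta_term A c0 c1 c2 z tau).

(* Main.v *)
Require Import Defs.
From HB Require Import structures.
From mathcomp Require Import all_boot all_order all_algebra.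
From mathcomp Require Import complex Rstruct.
From Stdlib Require Import Reals.
From mathcomp Require Import ring lra.
Import Order.TTheory GRing.Theory Num.Theory.
Local Open Scope ring_scope.
Set Implicit Arguments. Unset Strict Implicit.

Lemma BfDl r (A : 'M[int]_r) x y z : Bf A (x + y) z = Bf A x z + Bf A y z.
Proof. by rewrite /Bf raddfD /= !mulmxDl mxE. Qed.
Lemma BfDr r (A : 'M[int]_r) x y z : Bf A z (x + y) = Bf A z x + Bf A z y.
Proof. by rewrite /Bf !mulmxDr mxE. Qed.
Lemma BfZl r (A : 'M[int]_r) a x z : Bf A (a *: x) z = a * Bf A x z.
Proof. by rewrite /Bf linearZ /= -!scalemxAl mxE. Qed.
Lemma BfZr r (A : 'M[int]_r) a x z : Bf A z (a *: x) = a * Bf A z x.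
Proof. by rewrite /Bf -!scalemxAr mxE. Qed.
Lemma BfNl r (A : 'M[int]_r) x z : Bf A (- x) z = - Bf A x z.
Proof. by rewrite -scaleN1r BfZl mulN1r. Qed.
Lemma BfNr r (A : 'M[int]_r) x z : Bf A z (- x) = - Bf A z x.
Proof. by rewrite -scaleN1r BfZr mulN1r. Qed.
Lemma Bf_sym r (A : 'M[int]_r) x y : A^T = A -> Bf A x y = Bf A y x.
Proof.
move=> hA; rewrite /Bf.
transitivity ((x^T *m AR A *m y)^T 0 0); first by rewrite [RHS]mxE.
by rewrite !trmx_mul trmxK mulmxA /AR map_trmx hA.
Qed.
Lemma Bf_orth r (A : 'M[int]_r) (G : 'M[R]_r) x y :
  G^T *m AR A *m G = AR A -> Bf A (G *m x) (G *m y) = Bf A x y.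
Proof.
move=> hG; rewrite /Bf trmx_mul.
have -> : x^T *m G^T *m AR A *m (G *m y) = x^T *m (G^T *m AR A *m G) *m y by rewrite !mulmxA.
by rewrite hG.
Qed.
Definition Sw n (f g : 'I_n.+1 -> R) :=
  \sum_(i < n) f (widen_ord (leqnSn n) i) * g (widen_ord (leqnSn n) i).
Arguments Sw {n}.

Lemma Sw_expand n (u v : 'I_n.+1 -> R) (p q : R) :
  \sum_(i < n) (p * u (widen_ord (leqnSn n) i) - q * v (widen_ord (leqnSn n) i))^+2
  = p^+2 * Sw u u - 2 * p * q * Sw u v + q^+2 * Sw v v.
Proof.
rewrite /Sw !mulr_sumr -sumrB -big_split /=.
by apply: eq_bigr => i _; ring.
Qed.

Lemma Sw_ge0 n (u : 'I_n.+1 -> R) : 0 <= Sw u u.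
Proof. by apply: sumr_ge0 => i _; rewrite -expr2 sqr_ge0. Qed.

Lemma lorentz n (u v : 'I_n.+1 -> R) :
  Sw v v - v ord_max * v ord_max < 0 ->
  Sw u v - u ord_max * v ord_max = 0 ->
  0 <= Sw u u - u ord_max * u ord_max /\
  (Sw u u - u ord_max * u ord_max = 0 -> forall i, u i = 0).
Proof.
move=> hv huv.
have E := Sw_expand u v (v ord_max) (u ord_max).
have G : 0 <= \sum_(i < n) (v ord_max * u (widen_ord (leqnSn n) i) - u ord_max * v (widen_ord (leqnSn n) i))^+2.
  by apply: sumr_ge0 => i _; rewrite sqr_ge0.
have Hu := Sw_ge0 u; have Hv := Sw_ge0 v.
rewrite E in G.
have Hvv : 0 < v ord_max ^+ 2 by nra.
split; first by nra.
move=> h0.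
have Suv : Sw u v = u ord_max * v ord_max by lra.
have Suu : Sw u u = u ord_max * u ord_max by lra.
rewrite Suv Suu in G.
have h1 : u ord_max ^+ 2 * (v ord_max ^+ 2 - Sw v v) <= 0 by nra.
have h2 : 0 < v ord_max ^+ 2 - Sw v v by nra.
have h3 : u ord_max ^+ 2 <= 0 by nra.
have un0 : u ord_max = 0 by nra.
have Suu0 : Sw u u = 0 by nra.
have wz : forall j : 'I_n, u (widen_ord (leqnSn n) j) = 0.
  move=> j; move: Suu0; rewrite /Sw => /eqP; rewrite psumr_eq0; last first.
    by move=> i _; rewrite -expr2 sqr_ge0.
  by move=> /allP /(_ j (mem_index_enum _)) /=; rewrite mulf_eq0 orbb => /eqP.
move=> i; case: (ltnP i n) => hi.
  by have := wz (Ordinal hi); rewrite (_ : widen_ord _ _ = i) //; apply: val_inj.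
have -> : i = ord_max by apply: val_inj => /=; apply/eqP; rewrite eqn_leq hi -ltnS ltn_ord.
exact: un0.
Qed.

Lemma diagform n (u v : 'cV[R]_n.+1) :
  (u^T *m diag_mx (\row_(i < n.+1) if (i : nat) == n.+1.-1 then -1 else 1) *m v) 0 0
  = Sw (fun i => u i 0) (fun i => v i 0) - u ord_max 0 * v ord_max 0.
Proof.
rewrite mul_mx_diag mxE big_ord_recr /= !mxE eqxx /Sw.
congr (_ + _); last by ring.
apply: eq_bigr => i _; rewrite !mxE /= ltn_eqF ?ltn_ord //; ring.
Qed.

Lemma Bf0 (A : 'M[int]_0) x y : Bf A x y = 0.
Proof. by rewrite /Bf mxE big_ord0. Qed.

Lemma sig_L0 r (A : 'M[int]_r) y w : type_r1_1 A -> Bf A y y < 0 -> Bf A w y = 0 ->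
  0 <= Bf A w w /\ (Bf A w w = 0 -> w = 0).
Proof.
case: r A y w => [|n] A y w [P [hP hD]] hy hwy.
  by move: hy; rewrite Bf0 ltxx.
pose u := invmx P *m w; pose v := invmx P *m y.
have ew : w = P *m u by rewrite /u mulKVmx.
have ey : y = P *m v by rewrite /v mulKVmx.
have key : forall a b, Bf A (P *m a) (P *m b) =
    Sw (fun i => a i 0) (fun i => b i 0) - a ord_max 0 * b ord_max 0.
  move=> a b; rewrite -diagform -hD /Bf trmx_mul.
  by congr (_ 0 0); rewrite !mulmxA.
rewrite ew ey !key in hy hwy *.
have [h1 h2] := lorentz hy hwy.
split => // h0; have := h2 h0 => hu.
have -> : u = 0 by apply/matrixP => i j; rewrite ord1 hu mxE.
by rewrite mulmx0.
Qed.

Ltac bfexp := rewrite ?(BfDl, BfDr, BfNl, BfNr, BfZl, BfZr).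

Lemma rev_CS r (A : 'M[int]_r) x y : A^T = A -> type_r1_1 A -> Bf A y y < 0 ->
  Bf A x x * Bf A y y <= Bf A x y ^+ 2.
Proof.
move=> hA ht hy.
have hy0 : Bf A y y != 0 by rewrite lt_eqF.
pose t := Bf A x y / Bf A y y.
have ht1 : t * Bf A y y = Bf A x y by rewrite /t divfK.
have hw : Bf A (x - t *: y) y = 0.
  by rewrite BfDl BfNl BfZl ht1 subrr.
have [h _] := sig_L0 ht hy hw.
move: h; rewrite !(BfDl, BfDr, BfNl, BfNr, BfZl, BfZr) (Bf_sym y x hA) => h.
nra.
Qed.

Lemma cone_trans r (A : 'M[int]_r) x y z : A^T = A -> type_r1_1 A ->
  Bf A x x < 0 -> Bf A y y < 0 -> Bf A z z < 0 ->
  Bf A x y < 0 -> Bf A y z < 0 -> Bf A x z < 0.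
Proof.
move=> hA ht hx hy hz hxy hyz; rewrite ltNge; apply/negP => hxz.
pose w := (- Bf A y z) *: x + Bf A x z *: y.
have hw : Bf A w z = 0 by rewrite /w BfDl !BfZl; ring.
have hww : Bf A w w < 0.
  have ha : 0 < - Bf A y z by lra.
  have e1 : (- Bf A y z) * (- Bf A y z) * Bf A x x < 0.
    have : 0 < (- Bf A y z) * (- Bf A y z) by apply: mulr_gt0.
    nra.
  have e2 : (- Bf A y z) * Bf A x z * Bf A x y <= 0.
    have : 0 <= (- Bf A y z) * Bf A x z by apply: mulr_ge0; lra.
    nra.
  have e3 : Bf A x z * Bf A x z * Bf A y y <= 0.
    have : 0 <= Bf A x z * Bf A x z by apply: mulr_ge0.
    nra.
  rewrite /w !(BfDl, BfDr, BfNl, BfNr, BfZl, BfZr) (Bf_sym y x hA); lra.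
have := rev_CS w hA ht hz; rewrite (Bf_sym w z hA) in hw; rewrite Bf_sym // hw; nra.
Qed.

Lemma QfE r (A : 'M[int]_r) x : Qf A x = Bf A x x / 2.
Proof. by []. Qed.

Lemma orth_inv r (A : 'M[int]_r) (G Gi : 'M[R]_r) :
  G *m Gi = 1%:M -> G^T *m AR A *m G = AR A -> Gi^T *m AR A *m Gi = AR A.
Proof.
move=> hGG hG.
by rewrite -{1}hG !mulmxA -trmx_mul -!mulmxA hGG mulmx1 trmx1 mul1mx.
Qed.

Lemma CQ_fwd r (A : 'M[int]_r) c0 (G : 'M[R]_r) c :
  A^T = A -> type_r1_1 A -> Qf A c0 < 0 ->
  G^T *m AR A *m G = AR A -> (forall c, CQ A c0 c -> Bf A (G *m c) c < 0) ->
  CQ A c0 c -> CQ A c0 (G *m c).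
Proof.
move=> hA ht hc0 hG hpos [hq hb]; have hgc := hpos c (conj hq hb).
move: hq hc0; rewrite !QfE => hq hc0.
split; first by rewrite QfE Bf_orth //; lra.
apply: (cone_trans (y := c)) => //; try lra.
by rewrite Bf_orth //; lra.
Qed.

Lemma CQ_bwd r (A : 'M[int]_r) c0 (G Gi : 'M[R]_r) c :
  A^T = A -> type_r1_1 A -> Qf A c0 < 0 -> G *m Gi = 1%:M ->
  G^T *m AR A *m G = AR A -> (forall c, CQ A c0 c -> Bf A (G *m c) c < 0) ->
  CQ A c0 c -> CQ A c0 (Gi *m c).
Proof.
move=> hA ht hc0 hGG hG hpos [hq hb].
have hq' : Qf A (Gi *m c) = Qf A c by rewrite !QfE -(Bf_orth _ _ hG) !mulmxA hGG !mul1mx.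
split; first by rewrite hq'.
case: (ltgtP (Bf A (Gi *m c) c0) 0) => // h.
  have hd : CQ A c0 (- (Gi *m c)).
    split; first by rewrite QfE BfNl BfNr opprK -QfE hq'.
    by rewrite BfNl; lra.
  have [_] := CQ_fwd hA ht hc0 hG hpos hd.
  by rewrite mulmxN mulmxA hGG mul1mx BfNl; lra.
have hc0' : Bf A c0 c0 < 0 by move: hc0; rewrite QfE; lra.
have [h1 _] := sig_L0 ht hc0' h.
by move: hq; rewrite -hq' QfE; lra.
Qed.

Lemma iso_fwd r (A : 'M[int]_r) c0 (G Gi : 'M[R]_r) x :
  A^T = A -> type_r1_1 A -> Qf A c0 < 0 -> Gi *m G = 1%:M ->
  G^T *m AR A *m G = AR A -> (forall c, CQ A c0 c -> Bf A (G *m c) c < 0) ->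
  x != 0 -> Bf A x x = 0 -> Bf A x c0 < 0 -> Bf A (G *m x) c0 < 0.
Proof.
move=> hA ht hc0 hGiG hG hpos hx0 hxx hxc.
have hc0' : Bf A c0 c0 < 0 by move: hc0; rewrite QfE; lra.
have hc0Q : CQ A c0 c0 by split.
have [_ hk] := CQ_fwd hA ht hc0 hG hpos hc0Q.
have hd : forall e, 0 < e -> Bf A (G *m x) c0 + e * Bf A (G *m c0) c0 < 0.
  move=> e he.
  have hQ : CQ A c0 (x + e *: c0).
    split; last by rewrite BfDl BfZl; nra.
    rewrite QfE !(BfDl, BfDr, BfZl, BfZr) (Bf_sym c0 x hA) hxx; nra.
  have [_] := CQ_fwd hA ht hc0 hG hpos hQ.
  by rewrite mulmxDr -scalemxAr BfDl BfZl.
case: (ltgtP (Bf A (G *m x) c0) 0) => // h.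
  set b := Bf A (G *m x) c0 in h hd *; set k := Bf A (G *m c0) c0 in hk hd *.
  have he : 0 < b / - k by apply: divr_gt0; lra.
  have hk0 : k != 0 by rewrite lt_eqF.
  have ek : b / - k * k = - b by field.
  have := hd _ he; rewrite ek; lra.
have [_ h2] := sig_L0 ht hc0' h.
have hGx : G *m x = 0 by apply: h2; rewrite Bf_orth.
by move: hx0; rewrite -(mul1mx x) -hGiG -mulmxA hGx mulmx0 eqxx.
Qed.

Lemma iso_bwd r (A : 'M[int]_r) c0 (G Gi : 'M[R]_r) x :
  A^T = A -> type_r1_1 A -> Qf A c0 < 0 -> G *m Gi = 1%:M -> Gi *m G = 1%:M ->
  G^T *m AR A *m G = AR A -> (forall c, CQ A c0 c -> Bf A (G *m c) c < 0) ->
  x != 0 -> Bf A x x = 0 -> Bf A x c0 < 0 -> Bf A (Gi *m x) c0 < 0.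
Proof.
move=> hA ht hc0 hGG hGiG hG hpos hx0 hxx hxc.
have hc0' : Bf A c0 c0 < 0 by move: hc0; rewrite QfE; lra.
have eGx : G *m (Gi *m x) = x by rewrite mulmxA hGG mul1mx.
have hx'0 : Gi *m x != 0.
  by apply: contra hx0 => /eqP h; rewrite -eGx h mulmx0.
have hx'x' : Bf A (Gi *m x) (Gi *m x) = 0 by rewrite -(Bf_orth _ _ hG) eGx.
case: (ltgtP (Bf A (Gi *m x) c0) 0) => // h.
  have := iso_fwd hA ht hc0 hGiG hG hpos (x := - (Gi *m x)).
  rewrite oppr_eq0 hx'0 BfNl BfNr hx'x' oppr0 BfNl mulmxN eGx BfNl.
  move=> /(_ isT (oppr0 _)); lra.
have [_ h2] := sig_L0 ht hc0' h.
by move: hx'0; rewrite h2 ?eqxx.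
Qed.

Lemma mapR_mul r p (M : 'M[int]_r) (N : 'M[int]_(r,p)) :
  map_mx intR (M *m N) = map_mx intR M *m map_mx intR N.
Proof. exact: map_mxM. Qed.
Lemma mapC_mul r p (M : 'M[int]_r) (N : 'M[int]_(r,p)) :
  map_mx intC (M *m N) = map_mx intC M *m map_mx intC N.
Proof. exact: map_mxM. Qed.
Lemma mapR1 r : map_mx intR (1%:M : 'M[int]_r) = 1%:M.
Proof. by apply/matrixP => i j; rewrite !mxE /intR; case: (i == j); rewrite ?mulr1n ?mulr0n. Qed.
Lemma intC_E k : intC k = ((intR k)%:C)%C.
Proof. by rewrite /intC /intR rmorph_int. Qed.

Lemma prim_map r (M Mi : 'M[int]_r) m : Mi *m M = 1%:M -> Defs.primitive m -> Defs.primitive (M *m m).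
Proof.
move=> hMi hp d hd; apply: hp => i.
rewrite (_ : m = Mi *m (M *m m)); last by rewrite mulmxA hMi mul1mx.
by rewrite mxE; apply: rpred_sum => j _; apply: dvdz_mull; exact: hd.
Qed.

Lemma prim_nz r (m : 'cV[int]_r) : Defs.primitive m -> map_mx intR m != 0.
Proof.
move=> hp; apply/negP => /eqP h.
have m0 : forall i, m i 0 = 0.
  move=> i; have := congr1 (fun M : 'cV[R]_r => M i 0) h; rewrite !mxE /intR => e.
  by apply: (@intr_inj R); rewrite e.
by case: (hp 2) => [i|//|//]; rewrite m0 dvdz0.
Qed.

Lemma Im_sum (I : Type) (s : seq I) (F : I -> Cx) :
  complex.Im (\sum_(i <- s) F i) = \sum_(i <- s) complex.Im (F i).
Proof.
by apply: (big_morph (@complex.Im R) (id1 := 0) (op1 := +%R)) => // [[a b] [c d]].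
Qed.

Lemma Im_intC k (w : Cx) : complex.Im (intC k * w) = intR k * complex.Im w.
Proof. by rewrite intC_E; case: w => a b /=; ring. Qed.

Lemma avec_C r (C : 'M[int]_r) z tau :
  avec (map_mx intC C *m z) tau = map_mx intR C *m avec z tau.
Proof.
apply/matrixP => i j; rewrite !mxE Im_sum mulr_suml.
by apply: eq_bigr => k _; rewrite !mxE Im_intC mulrA.
Qed.

Lemma HasSum_reindex r (f g : 'cV[int]_r -> Cx) (h hi : 'cV[int]_r -> 'cV[int]_r) s :
  cancel h hi -> cancel hi h -> (forall n, g n = f (h n)) -> HasSum f s -> HasSum g s.
Proof.
move=> K1 K2 E HS e he; have [F0 HF] := HS e he; exists (map hi F0) => F uF sub.
have := HF (map h F); rewrite big_map (map_inj_uniq (can_inj K1)) uF.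
have -> : \sum_(n <- F) g n = \sum_(n <- F) f (h n) by apply: eq_bigr.
apply=> // x hx; rewrite -[x]K2; apply: map_f; apply: sub; exact: map_f.
Qed.

From Stdlib Require Import FunctionalExtensionality PropExtensionality ClassicalEpsilon.

Lemma SumZr_reindex r (f g : 'cV[int]_r -> Cx) (h hi : 'cV[int]_r -> 'cV[int]_r) :
  cancel h hi -> cancel hi h -> (forall n, g n = f (h n)) -> SumZr g = SumZr f.
Proof.
move=> K1 K2 E; rewrite /SumZr; congr epsilon.
apply: functional_extensionality => s; apply: propositional_extensionality; split.
  apply: (HasSum_reindex (h := hi) (hi := h)) => // n; by rewrite E K2.
exact: HasSum_reindex.
Qed.

Unset Implicit Arguments.

Theorem proposition2p13 (r : nat) (A : 'M[int]_r) (c0 : 'cV[R]_r)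
  (hAsym : A^T = A) (hAnd : \det A != 0) (htype : type_r1_1 A)
  (hc0 : Qf A c0 < 0)
  (C : 'M[int]_r) (hC : OAplusZ A c0 C)
  (c1 c2 : 'cV[R]_r) (hc1 : CQbar A c0 c1) (hc2 : CQbar A c0 c2)
  (z : 'cV[Cx]_r) (tau : Cx)
  (hz1 : Dset A c0 c1 z tau) (hz2 : Dset A c0 c2 z tau) :
  let CR := map_mx intR C in
  let CC := map_mx intC C in
  ((forall c, CQ A c0 c -> CQ A c0 (CR *m c)) /\
   (forall c, CQ A c0 c -> exists c', CQ A c0 c' /\ c = CR *m c')) /\
  ((forall m, SQ A c0 m -> SQ A c0 (C *m m)) /\
   (forall m, SQ A c0 m -> exists m', SQ A c0 m' /\ m = C *m m')) /\
  (Dset A c0 (CR *m c1) (CC *m z) tau /\ Dset A c0 (CR *m c2) (CC *m z) tau) /\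
  theta A c0 (CR *m c1) (CR *m c2) (CC *m z) tau = theta A c0 c1 c2 z tau.
Proof.
move=> CR CC.
case: hC => [[_ [hG hpos]] hCu].
pose Ci := invmx C.
have hCCi : C *m Ci = 1%:M by rewrite /Ci mulmxV.
have hCiC : Ci *m C = 1%:M by rewrite /Ci mulVmx.
pose CiR := map_mx intR Ci.
have hGG : CR *m CiR = 1%:M by rewrite /CR /CiR -mapR_mul hCCi mapR1.
have hGiG : CiR *m CR = 1%:M by rewrite /CR /CiR -mapR_mul hCiC mapR1.
have hGi : CiR^T *m AR A *m CiR = AR A := orth_inv hGG hG.
have cqf := fun c => @CQ_fwd r A c0 CR c hAsym htype hc0 hG hpos.
have cqb := fun c => @CQ_bwd r A c0 CR CiR c hAsym htype hc0 hGG hG hpos.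
have cq_iff : forall c, CQ A c0 (CR *m c) <-> CQ A c0 c.
  move=> c; split; last exact: cqf.
  by move=> /cqb; rewrite mulmxA hGiG mul1mx.
have hQ : forall x, Qf A (CR *m x) = Qf A x by move=> x; rewrite !QfE Bf_orth.
have sqf : forall m, SQ A c0 m -> SQ A c0 (C *m m).
  move=> m [hp [hq hb]]; split; first exact: prim_map hCiC hp.
  rewrite mapR_mul hQ; split => //.
  apply: (iso_fwd hAsym htype hc0 hGiG hG hpos) => //; first exact: prim_nz.
  by move: hq; rewrite QfE; lra.
have sqb : forall m, SQ A c0 m -> SQ A c0 (Ci *m m).
  move=> m [hp [hq hb]]; split; first exact: prim_map hCCi hp.
  rewrite mapR_mul; split.
    by rewrite -hQ mulmxA hGG mul1mx.
  apply: (iso_bwd hAsym htype hc0 hGG hGiG hG hpos) => //; first exact: prim_nz.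
  by move: hq; rewrite QfE; lra.
have hD : forall c, Dset A c0 c z tau -> Dset A c0 (CR *m c) (CC *m z) tau.
  move=> c [hy hR]; split => //; rewrite avec_C.
  case: hR => [hq|[[m [hm ->]] hk]]; first by left; apply: cqf.
  right; split; first by exists (C *m m); split; [exact: sqf | rewrite mapR_mul].
  by rewrite Bf_orth.
split.
  split; first exact: cqf.
  move=> c hc; exists (CiR *m c); split; first exact: cqb.
  by rewrite mulmxA hGG mul1mx.
split.
  split; first exact: sqf.
  move=> m hm; exists (Ci *m m); split; first exact: sqb.
  by rewrite mulmxA hCCi mul1mx.
split; first by split; apply: hD.
have hAZ : C^T *m A *m C = A.
  have H : map_mx intR (C^T *m A *m C) = map_mx intR A by rewrite !mapR_mul -map_trmx; exact: hG.
  apply/matrixP => i j; have := congr1 (fun M : 'M[R]_r => M i j) H.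
  by rewrite !mxE /intR => /intr_inj.
have hrho : forall c nu, rho A c0 (CR *m c) (CR *m nu) tau = rho A c0 c nu tau.
  move=> c nu; rewrite /rho.
  case: excluded_middle_informative => h1; case: excluded_middle_informative => h2.
  - by rewrite Bf_orth // hQ.
  - by exfalso; apply: h2; apply/cq_iff.
  - by exfalso; apply: h1; apply/cq_iff.
  - by rewrite Bf_orth.
rewrite /theta; symmetry; apply: (SumZr_reindex (h := fun n => C *m n) (hi := fun n => Ci *m n)).
- by move=> n; rewrite mulmxA hCiC mul1mx.
- by move=> n; rewrite mulmxA hCCi mul1mx.
move=> n; rewrite /theta_term mapR_mul avec_C -mulmxDr !hrho hQ.
congr (_ * cexp (_ + twopii * _)).
rewrite /BnC mapC_mul trmx_mul.
have -> : (map_mx intC n)^T *m CC^T *m map_mx intC A *m (CC *m z)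
  = (map_mx intC n)^T *m (map_mx intC (C^T *m A *m C)) *m z.
  by rewrite !mapC_mul -map_trmx !mulmxA.
by rewrite hAZ.
Qed.
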